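(* Let $\Bbbk$ be an algebraically closed field of characteristic zero and $H$ the $\Bbbk$-algebra generated by $b,c,z$ with relations $b^2=c^2=1$, $bc=cb$, $zb=-bz$, $zc=-cz$, $z^2=0$. Let $e_0=\frac14(1+b)(1+c)$, $e_1=\frac14(1+b)(1-c)$, $e_2=\frac14(1-b)(1+c)$, $e_3=\frac14(1-b)(1-c)$, and let $\tau$ be the permutation of $\{0,1,2,3\}$ with $\tau(0)=3,\tau(1)=2,\tau(2)=1,\tau(3)=0$. Then for $0\leq i\leq3$ and any $k\in\{0,1,2,3\}\setminus\{i,\tau(i)\}$, the annihilator ideal of the $H$-module $M(2,i)$ is $(ze_{\tau(i)}+e_k+e_{\tau(k)})$.
   Context: $V_i=\Bbbk v_i$ ($0\leq i\leq3$) are the one-dimensional modules of the group algebra of $\langle b,c\rangle\cong$ Klein four-group with $b\cdot v_0=v_0,c\cdot v_0=v_0$; $b\cdot v_1=v_1,c\cdot v_1=-v_1$; $b\cdot v_2=-v_2,c\cdot v_2=v_2$; $b\cdot v_3=-v_3,c\cdot v_3=-v_3$. $M(2,i)$ is the $2$-dimensional $H$-module with basis $v_i, xv_i$ where $b\cdot(xv_i)=-x(b\cdot v_i)$, $c\cdot(xv_i)=-x(c\cdot v_i)$, $z\cdot v_i=xv_i$, $z\cdot(xv_i)=0$. $(a)$ denotes the two-sided ideal of $H$ generated by $a$. *)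

(* Defs.v *)
From HB Require Import structures.
From mathcomp Require Import all_boot all_order all_algebra all_field.
Set Implicit Arguments. Unset Strict Implicit. Unset Printing Implicit Defensive.
Import GRing.Theory.
Local Open Scope ring_scope.

Definition H_rel (K : fieldType) (B : algType K) (b c z : B) : Prop :=
  b * b = 1 /\ c * c = 1 /\ b * c = c * b /\ z * b = - (b * z) /\
  z * c = - (c * z) /\ z * z = 0.

(* (A, b, c, z) is the K-algebra presented by generators b, c, z and the
   relations H_rel: universal property of the presentation. *)
Definition is_H (K : fieldType) (A : algType K) (b c z : A) : Prop :=
  H_rel b c z /\
  forall (B : algType K) (b' c' z' : B), H_rel b' c' z' ->
    (exists f : {lrmorphism A -> B}, [/\ f b = b', f c = c' & f z = z'])
    /\ (forall f g : {lrmorphism A -> B},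
          f b = b' -> f c = c' -> f z = z' ->
          g b = b' -> g c = c' -> g z = z' -> f =1 g).

(* eigenvalue signs of b and c on v_i *)
Definition sgn_b (K : fieldType) (i : 'I_4) : K := if (i < 2)%N then 1 else -1.
Definition sgn_c (K : fieldType) (i : 'I_4) : K := if odd i then -1 else 1.

Definition idem (K : fieldType) (A : algType K) (b c : A) (i : 'I_4) : A :=
  (4%:R : K)^-1 *: ((1 + sgn_b K i *: b) * (1 + sgn_c K i *: c)).

Definition tau (i : 'I_4) : 'I_4 := rev_ord i.

(* Action of H on M(2,i) w.r.t. the basis (v_i, x v_i), column vectors *)
Definition Mb (K : fieldType) (i : 'I_4) : 'M[K]_2 :=
  \matrix_(r < 2, s < 2) (if r == s then (if r == 0 :> nat then sgn_b K i else - sgn_b K i) else 0).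
Definition Mc (K : fieldType) (i : 'I_4) : 'M[K]_2 :=
  \matrix_(r < 2, s < 2) (if r == s then (if r == 0 :> nat then sgn_c K i else - sgn_c K i) else 0).
(* z v_i = x v_i, z (x v_i) = 0 *)
Definition Mz (K : fieldType) : 'M[K]_2 :=
  \matrix_(r < 2, s < 2) (if (r == 1 :> nat) && (s == 0 :> nat) then 1 else 0).

Definition annihilates (K : fieldType) (A : algType K) (rho : A -> 'M[K]_2) (h : A) : Prop :=
  forall v : 'cV[K]_2, rho h *m v = 0.

Definition in_ideal2 (R : pzRingType) (a h : R) : Prop :=
  exists n (l r : 'I_n -> R), h = \sum_(j < n) l j * a * r j.

(* Main.v *)
Require Import Defs.
From HB Require Import structures.
From mathcomp Require Import all_boot all_order all_algebra all_field.
Import GRing.Theory.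
Local Open Scope ring_scope.
From HB Require Import structures.
From mathcomp Require Import all_boot all_order all_algebra all_field.
From mathcomp Require Import boolp.
From mathcomp.algebra_tactics Require Import ring.
Set Implicit Arguments. Unset Strict Implicit. Unset Printing Implicit Defensive.
Import GRing.Theory.
Local Open Scope ring_scope.

Section HFacts.
Variables (K : fieldType) (H : algType K) (b c z : H).
Hypothesis hr : H_rel b c z.

Lemma sgnb2 (j : 'I_4) : sgn_b K j * sgn_b K j = 1.
Proof. by rewrite /sgn_b; case: ifP => _; rewrite ?mulrNN mulr1. Qed.
Lemma sgnc2 (j : 'I_4) : sgn_c K j * sgn_c K j = 1.
Proof. by rewrite /sgn_c; case: ifP => _; rewrite ?mulrNN mulr1. Qed.

Lemma bbr : b * b = 1. Proof. by case: hr. Qed.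
Lemma ccr : c * c = 1. Proof. by case: hr => _ []. Qed.
Lemma bcr : b * c = c * b. Proof. by case: hr => _ [] _ []. Qed.
Lemma zbr : z * b = - (b * z). Proof. by case: hr => _ [] _ [] _ []. Qed.
Lemma zcr : z * c = - (c * z). Proof. by case: hr => _ [] _ [] _ [] _ []. Qed.
Lemma zzr : z * z = 0. Proof. by case: hr => _ [] _ [] _ [] _ []. Qed.

Lemma gen_idem (x : H) (s : K) (X : H) : x * x = 1 -> s * s = 1 ->
  x * ((1 + s *: x) * X) = s *: ((1 + s *: x) * X).
Proof.
move=> xx ss; rewrite mulrA mulrDr mulr1 -scalerAr xx scalerAl scalerDr scalerA ss.
by rewrite scale1r addrC.
Qed.

Lemma gen_idem1 (x : H) (s : K) : x * x = 1 -> s * s = 1 ->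
  x * (1 + s *: x) = s *: (1 + s *: x).
Proof. by move=> xx ss; have := gen_idem 1 xx ss; rewrite !mulr1. Qed.

Lemma F1 j : b * idem b c j = sgn_b K j *: idem b c j.
Proof.
by rewrite /idem -scalerAr gen_idem ?bbr ?sgnb2 // scalerA mulrC -scalerA.
Qed.

Lemma F2 j : c * idem b c j = sgn_c K j *: idem b c j.
Proof.
have cm : c * (1 + sgn_b K j *: b) = (1 + sgn_b K j *: b) * c.
  by rewrite mulrDr mulrDl mulr1 mul1r -scalerAr -scalerAl bcr.
rewrite /idem -scalerAr mulrA cm -mulrA.
by rewrite gen_idem1 ?ccr ?sgnc2 // -!scalerAr scalerA mulrC -scalerA; congr (_ *: _).
Qed.

Lemma F5b j : b * (z * idem b c j) = - sgn_b K j *: (z * idem b c j).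
Proof.
by rewrite mulrA -[b * z]opprK -zbr mulNr -mulrA F1 scaleNr scalerAr.
Qed.
Lemma F5c j : c * (z * idem b c j) = - sgn_c K j *: (z * idem b c j).
Proof.
by rewrite mulrA -[c * z]opprK -zcr mulNr -mulrA F2 scaleNr scalerAr.
Qed.

Lemma linstep (x e : H) (s u : K) : x * e = u *: e -> (1 + s *: x) * e = (1 + s * u) *: e.
Proof. by move=> xe; rewrite mulrDl mul1r -scalerAl xe scalerA scalerDl scale1r. Qed.

Hypothesis four : (4%:R : K) != 0.

Lemma scal_id (l j : 'I_4) :
  4%:R^-1 * ((1 + sgn_c K l * sgn_c K j) * (1 + sgn_b K l * sgn_b K j)) = (l == j)%:R.
Proof.
case: l => [[|[|[|[|l]]]] Hl] //; case: j => [[|[|[|[|j]]]] Hj] //;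
  rewrite /sgn_b /sgn_c /= ?eqE /=; field; done.
Qed.

Lemma F4 l j : idem b c l * idem b c j = (l == j)%:R *: idem b c j.
Proof.
rewrite {1}/idem -scalerAl -mulrA (linstep _ (F2 j)) -scalerAr (linstep _ (F1 j)).
by rewrite !scalerA -scal_id mulrA.
Qed.

Lemma F3 : \sum_j idem b c j = 1.
Proof.
rewrite !big_ord_recr big_ord0 /= /idem /sgn_b /sgn_c /= add0r -!scalerDr.
rewrite -!addrA -mulrDr addrA -mulrDr -mulrDl !scaleN1r !scale1r.
have two (x : H) : 1 + x + (1 - x) = 2%:R by rewrite addrACA subrr addr0.
rewrite !two -natrM -scaler_nat scalerA mulVf //.
by rewrite scale1r.
Qed.

End HFacts.

Section Sub.
Variables (K : fieldType) (H : algType K) (b c z : H).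
Hypothesis hr : H_rel b c z.
Hypothesis four : (4%:R : K) != 0.

Local Notation e := (idem b c).

Definition inS (h : H) : bool :=
  `[< exists al ga : 'I_4 -> K, h = \sum_j (al j *: e j + ga j *: (z * e j)) >].

Lemma inSP h : reflect (exists al ga : 'I_4 -> K, h = \sum_j (al j *: e j + ga j *: (z * e j))) (inS h).
Proof. exact: asboolP. Qed.

Lemma S0 : inS 0.
Proof.
apply/inSP; exists (fun _ => 0), (fun _ => 0).
by rewrite big1 // => j _; rewrite !scale0r addr0.
Qed.

Lemma SL a u v : inS u -> inS v -> inS (a *: u + v).
Proof.
move=> /inSP[al [ga ->]] /inSP[al' [ga' ->]]; apply/inSP.
exists (fun j => a * al j + al' j), (fun j => a * ga j + ga' j).
rewrite scaler_sumr -big_split /=; apply: eq_bigr => j _.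
by rewrite !scalerDl !scalerDr !scalerA addrACA.
Qed.

Lemma S1 : inS 1.
Proof.
apply/inSP; exists (fun _ => 1), (fun _ => 0).
rewrite -(@F3 _ _ b c four); apply: eq_bigr => j _.
by rewrite scale0r addr0 scale1r.
Qed.

Lemma Ssum (I : finType) (P : I -> H) : (forall j, inS (P j)) -> inS (\sum_j P j).
Proof.
move=> HP; apply: (big_ind inS) => //; first exact: S0.
by move=> x y Sx Sy; rewrite -[x]scale1r; apply: SL.
Qed.

Lemma SZ a u : inS u -> inS (a *: u).
Proof. by move=> Su; rewrite -[_ *: u]addr0; apply: SL => //; apply: S0. Qed.

Lemma SD u v : inS u -> inS v -> inS (u + v).
Proof. by move=> Su Sv; rewrite -[u]scale1r; apply: SL. Qed.

Lemma Sb u : inS u -> inS (b * u).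
Proof.
move=> /inSP[al [ga ->]]; apply/inSP.
exists (fun j => al j * sgn_b K j), (fun j => - (ga j * sgn_b K j)).
rewrite mulr_sumr; apply: eq_bigr => j _.
by rewrite mulrDr -(scalerAr (al j)) -(scalerAr (ga j)) (F1 hr) (F5b hr) !scalerA mulrN.
Qed.

Lemma Sc u : inS u -> inS (c * u).
Proof.
move=> /inSP[al [ga ->]]; apply/inSP.
exists (fun j => al j * sgn_c K j), (fun j => - (ga j * sgn_c K j)).
rewrite mulr_sumr; apply: eq_bigr => j _.
by rewrite mulrDr -(scalerAr (al j)) -(scalerAr (ga j)) (F2 hr) (F5c hr) !scalerA mulrN.
Qed.

Lemma Sz u : inS u -> inS (z * u).
Proof.
move=> /inSP[al [ga ->]]; apply/inSP.
exists (fun j => 0), (fun j => al j).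
rewrite mulr_sumr; apply: eq_bigr => j _.
by rewrite mulrDr -(scalerAr (al j)) -(scalerAr (ga j)) mulrA (zzr hr) mul0r scaler0 addr0 scale0r add0r.
Qed.

Lemma Saff (x : H) s w : (forall u, inS u -> inS (x * u)) -> inS w -> inS ((1 + s *: x) * w).
Proof.
by move=> Hx Sw; rewrite mulrDl mul1r -scalerAl addrC; apply: SL => //; apply: Hx.
Qed.

Lemma Se j u : inS u -> inS (e j * u).
Proof.
move=> Su; rewrite /idem -scalerAl -mulrA; apply: SZ.
by apply: Saff; [exact: Sb | apply: Saff => //; exact: Sc].
Qed.

Lemma SM u v : inS u -> inS v -> inS (u * v).
Proof.
move=> /inSP[al [ga ->]] Sv; rewrite mulr_suml; apply: Ssum => j.
rewrite mulrDl -(scalerAl (al j)) -(scalerAl (ga j)) -mulrA.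
apply: SD; apply: SZ; [exact: Se | apply: Sz; exact: Se].
Qed.

Lemma Sclosed : subalg_closed inS.
Proof.
split; first exact: S1.
  by move=> a u v; apply: SL.
by move=> x y; apply: SM.
Qed.

Definition SH := {h : H | inS h}.
HB.instance Definition _ := [isSub of SH for @sval H inS].
HB.instance Definition _ := [Choice of SH by <:].
HB.instance Definition _ := GRing.isSubalgClosed.Build K H inS (GRing.subalg_closed_semi Sclosed).
HB.instance Definition _ := [SubChoice_isSubAlgebra of SH by <:].

Definition valS : SH -> H := val.
HB.instance Definition _ := GRing.RMorphism.copy valS (val : SH -> H).
HB.instance Definition _ := GRing.Linear.copy valS (val : SH -> H).
Lemma vM (x y : SH) : val (x * y) = val x * val y.
Proof. exact: (rmorphM valS). Qed.
Lemma v1 : val (1 : SH) = 1.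
Proof. exact: (rmorph1 valS). Qed.
Lemma vN (x : SH) : val (- x) = - val x.
Proof. exact: (rmorphN valS). Qed.
Lemma v0 : val (0 : SH) = 0.
Proof. exact: (rmorph0 valS). Qed.

Lemma spanH : is_H b c z -> forall h, inS h.
Proof.
case=> _ U.
have Sb1 : inS b by rewrite -[b]mulr1; apply: Sb; apply: S1.
have Sc1 : inS c by rewrite -[c]mulr1; apply: Sc; apply: S1.
have Sz1 : inS z by rewrite -[z]mulr1; apply: Sz; apply: S1.
pose b' : SH := Sub b Sb1. pose c' : SH := Sub c Sc1. pose z' : SH := Sub z Sz1.
have rel' : H_rel b' c' z'.
  case: hr => [e1 [e2 [e3 [e4 [e5 e6]]]]].
  by split; [|split; [|split; [|split; [|split]]]]; apply: val_inj;
    rewrite ?vM ?vN ?v1 ?v0 /= ?vM ?SubK.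
have [[f [fb fc fz]] _] := U SH b' c' z' rel'.
have [_ uq] := U H b c z hr.
have := uq (valS \o f) idfun.
rewrite /= fb fc fz /valS !SubK => /(_ erefl erefl erefl erefl erefl erefl) E h.
have /= <- := E h; exact: valP.
Qed.

End Sub.

Definition RM (K : fieldType) (i j : 'I_4) : 'M[K]_2 :=
  \matrix_(r < 2, s < 2) (if r == s then (if r == 0 :> nat then (j == i)%:R else (j == tau i)%:R) else 0).

Lemma mat_idem (K : fieldType) (four : (4%:R : K) != 0) (i j : 'I_4) :
  4%:R^-1 *: ((1 + sgn_b K j *: Mb K i) * (1 + sgn_c K j *: Mc K i)) = RM K i j.
Proof.
apply/matrixP => r s; rewrite -mulmxE !mxE big_ord_recr big_ord1 /= !mxE.
case: i => [[|[|[|[|i]]]] Hi] //; case: j => [[|[|[|[|j]]]] Hj] //;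
case: r => [[|[|r]] Hr] //; case: s => [[|[|s]] Hs] //;
rewrite /sgn_b /sgn_c /tau /= ?eqE /=; field; done.
Qed.

Lemma mat_z (K : fieldType) (i j : 'I_4) :
  Mz K * RM K i j = \matrix_(r < 2, s < 2) (if (r == 1 :> nat) && (s == 0 :> nat) then (j == i)%:R else 0).
Proof.
apply/matrixP => r s; rewrite -mulmxE !mxE big_ord_recr big_ord1 /= !mxE.
by case: r => [[|[|r]] Hr] //; case: s => [[|[|s]] Hs] //=; rewrite ?mul0r ?mulr0 ?mul1r ?addr0 ?add0r.
Qed.

Lemma cover4 (i k j : 'I_4) : k != i -> k != tau i ->
  [|| j == i, j == tau i, j == k | j == tau k].
Proof.
by case: i => [[|[|[|[|i]]]] Hi] //; case: k => [[|[|[|[|k]]]] Hk] //;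
  case: j => [[|[|[|[|j]]]] Hj] //.
Qed.

Lemma tau_neq (i : 'I_4) : (tau i == i) = false.
Proof. by case: i => [[|[|[|[|i]]]] Hi]. Qed.

Lemma tauK : involutive tau.
Proof. exact: rev_ordK. Qed.

Lemma tau_eq (x y : 'I_4) : (tau x == tau y) = (x == y).
Proof. by apply/eqP/eqP => [E|->] //; rewrite -(tauK x) E tauK. Qed.

Lemma sum_pick (K : fieldType) (F : 'I_4 -> K) (i : 'I_4) :
  \sum_j F j * (j == i)%:R = F i.
Proof.
rewrite (bigD1 i) //= eqxx mulr1 big1 ?addr0 // => j /negbTE ->.
by rewrite mulr0.
Qed.

Lemma ann0 (K : fieldType) (A : 'M[K]_2) : (forall v : 'cV[K]_2, A *m v = 0) -> A = 0.
Proof.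
move=> HA; apply/matrixP => r s.
have := HA (delta_mx s 0); rewrite -colE => /matrixP /(_ r 0).
by rewrite !mxE.
Qed.

Lemma rho_idem (K : fieldType) (H : algType K) (rho : {lrmorphism H -> 'M[K]_2}) b c i j (Hrb : rho b = Mb K i) (Hrc : rho c = Mc K i): rho (idem b c j) = 4%:R^-1 *: ((1 + sgn_b K j *: Mb K i) * (1 + sgn_c K j *: Mc K i)).
Proof.
have h1 : rho (1 + sgn_b K j *: b) = 1 + sgn_b K j *: Mb K i.
  by rewrite linearD linearZ_LR rmorph1 /= Hrb.
have h2 : rho (1 + sgn_c K j *: c) = 1 + sgn_c K j *: Mc K i.
  by rewrite linearD linearZ_LR rmorph1 /= Hrc.
by rewrite /idem linearZ_LR rmorphM /= h1 h2.
Qed.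

Unset Implicit Arguments.
Set Strict Implicit.
Set Printing Implicit Defensive.


Lemma rZ (K : fieldType) (H : algType K) (rho : {lrmorphism H -> 'M[K]_2}) (k : K) (x : H) : rho (k *: x) = k *: rho x.
Proof. by rewrite linearZ_LR. Qed.

Lemma ra_lemma (K : fieldType) (i k : 'I_4) : k != i -> k != tau i ->
  Mz K * RM K i (tau i) + RM K i k + RM K i (tau k) = 0.
Proof.
move=> Hki Hkt; rewrite mat_z; apply/matrixP => r s; rewrite !mxE.
move: Hki Hkt; rewrite /tau.
by case: i => [[|[|[|[|i]]]] Hi] //; case: k => [[|[|[|[|k]]]] Hk] //;
  case: r => [[|[|r]] Hr] //; case: s => [[|[|s]] Hs] //=; rewrite ?addr0.
Qed.

Theorem corollary5p2 (K : closedFieldType) (HK : [pchar K] =i pred0)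
  (H : algType K) (b c z : H) (HH : is_H b c z)
  (i : 'I_4) (rho : {lrmorphism H -> 'M[K]_2})
  (Hrb : rho b = Mb K i) (Hrc : rho c = Mc K i) (Hrz : rho z = Mz K)
  (k : 'I_4) (Hki : k != i) (Hkt : k != tau i) :
  forall h : H, annihilates rho h <->
    in_ideal2 (z * idem b c (tau i) + idem b c k + idem b c (tau k)) h.
Proof.
have four : (4%:R : K) != 0 by rewrite ((pcharf0P K).1 HK).
have hr : H_rel b c z by case: HH.
have rD (x y : H) : rho (x + y) = rho x + rho y by rewrite linearD.
have rZ' (x : K) (y : H) : rho (x *: y) = x *: rho y by rewrite linearZ_LR.
have rhoE j : rho (idem b c j) = RM K i j.
  by rewrite (rho_idem j Hrb Hrc) mat_idem.
have rhoZ j : rho (z * idem b c j) = Mz K * RM K i j by rewrite rmorphM /= Hrz rhoE.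
set a := _ + _ + _.
have ra : rho a = 0.
  by rewrite !rmorphD /= rhoZ !rhoE ra_lemma.
move=> h; split.
- move=> /ann0 R0.
  have /inSP [al [ga Eh]] := spanH hr four HH h.
  rewrite Eh rmorph_sum /= in R0.
  have rterm j : rho (al j *: idem b c j + ga j *: (z * idem b c j)) = al j *: RM K i j + ga j *: (Mz K * RM K i j).
    by rewrite rD (rZ' (al j)) (rZ' (ga j)) rhoE rhoZ.
  have E r s : \sum_j (al j * RM K i j r s + ga j * (Mz K * RM K i j) r s) = 0.
    move/matrixP: R0 => /(_ r s); rewrite summxE !mxE => E0; rewrite -[X in _ = X]E0.
    by apply: eq_bigr => j _; rewrite rterm !mxE.
  have c00 : al i = 0.
    have := E 0 0; under eq_bigr => j _ do rewrite mat_z !mxE /=.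
    by rewrite (eq_bigr (fun j => al j * (j == i)%:R)) ?sum_pick // => j _; rewrite mulr0 addr0.
  have c11 : al (tau i) = 0.
    have := E 1 1; under eq_bigr => j _ do rewrite mat_z !mxE /=.
    by rewrite (eq_bigr (fun j => al j * (j == tau i)%:R)) ?sum_pick // => j _; rewrite mulr0 addr0.
  have c10 : ga i = 0.
    have := E 1 0; under eq_bigr => j _ do rewrite mat_z !mxE /=.
    by rewrite (eq_bigr (fun j => ga j * (j == i)%:R)) ?sum_pick // => j _; rewrite mulr0 add0r.
  exists 4, (fun j => (al j)%:A + (if j == tau i then (ga j)%:A else ga j *: z)), (fun j => idem b c j).
  rewrite Eh; apply: eq_bigr => j _.
  have ae : a * idem b c j = (tau i == j)%:R *: (z * idem b c j) + (k == j)%:R *: idem b c j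
      + (tau k == j)%:R *: idem b c j.
    by rewrite /a !mulrDl -mulrA !(F4 hr four) scalerAr.
  rewrite -mulrA ae.
  have f1 : (i == k) = false by rewrite eq_sym (negbTE Hki).
  have f2 : (k == i) = false by rewrite (negbTE Hki).
  have f3 : (k == tau i) = false by rewrite (negbTE Hkt).
  have f4 : (tau i == k) = false by rewrite eq_sym (negbTE Hkt).
  have f5 : (tau k == i) = false by rewrite -tau_eq tauK f3.
  have f6 : (i == tau k) = false by rewrite eq_sym f5.
  have f7 : (tau k == tau i) = false by rewrite tau_eq f2.
  have f8 : (tau i == tau k) = false by rewrite tau_eq f1.
  have f9 : (i == tau i) = false by rewrite eq_sym tau_neq.
  have f10 : (k == tau k) = false by rewrite eq_sym tau_neq.
  have := cover4 j Hki Hkt; case/or4P => /eqP ->;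
    rewrite ?eqxx ?f1 ?f2 ?f3 ?f4 ?f5 ?f6 ?f7 ?f8 ?f9 ?f10 ?tau_neq ?c00 ?c10 ?c11 /=;
    rewrite ?scale0r ?scale1r ?add0r ?addr0 ?mul0r ?mulr0 ?mulrDl ?mulr_algl -?scalerAl //.
- case=> n [l [r ->]] v.
  suff -> : rho (\sum_(j < n) l j * a * r j) = 0 by rewrite mul0mx.
  rewrite rmorph_sum /= big1 // => j _.
  by rewrite !rmorphM /= ra mulr0 mul0r.
Qed.
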